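(* Let $S$ be a monoid in which the unique maximal right ideal $\mathfrak{M}$ is two-sided. Let $A$ be a right $S$-act and $B$ a maximal subact of $A$ such that there exists $a\in A\setminus B$ with $\mathfrak{M}=\{s\in S\mid as\in B\}$. Then for every proper right ideal $I$ of $S$ we have $AI\neq A$.
   Context: $S$ is a monoid with identity $1$ having at least one right non-invertible element. A (right) $S$-act is a nonempty set $A$ with an action $(a,s)\mapsto as$ satisfying $a1=a$, $a(st)=(as)t$. A subact is a nonempty subset closed under the action; a maximal subact is a proper subact not properly contained in another proper subact. $\mathfrak{M}=\{s\in S\mid st\neq1\ \forall t\in S\}$ is the unique maximal right ideal of $S$, containing every proper right ideal. For a right ideal $I$, $AI=\{as\mid a\in A, s\in I\}$. *)

(* Defs.v *)
Definition is_monoid {S : Type} (mul : S -> S -> S) (one : S) : Prop :=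
  (forall x y z, mul x (mul y z) = mul (mul x y) z) /\
  (forall x, mul one x = x) /\ (forall x, mul x one = x).

Definition is_right_act {S A : Type} (mul : S -> S -> S) (one : S)
  (act : A -> S -> A) : Prop :=
  (forall a, act a one = a) /\
  (forall a s t, act a (mul s t) = act (act a s) t).

Definition is_subact {S A : Type} (act : A -> S -> A) (B : A -> Prop) : Prop :=
  (exists b, B b) /\ (forall b s, B b -> B (act b s)).

Definition proper {T : Type} (X : T -> Prop) : Prop := exists x, ~ X x.

Definition is_maximal_subact {S A : Type} (act : A -> S -> A) (B : A -> Prop) : Prop :=
  is_subact act B /\ proper B /\
  forall C : A -> Prop, is_subact act C -> proper C ->
    (forall x, B x -> C x) -> forall x, C x -> B x.

Definition is_right_ideal {S : Type} (mul : S -> S -> S) (I : S -> Prop) : Prop :=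
  (exists s, I s) /\ (forall s t, I s -> I (mul s t)).

Definition frakM {S : Type} (mul : S -> S -> S) (one : S) : S -> Prop :=
  fun s => forall t, mul s t <> one.

Definition actI {S A : Type} (act : A -> S -> A) (I : S -> Prop) : A -> Prop :=
  fun x => exists a s, I s /\ x = act a s.

(* Main.v *)
Require Import Defs.

Theorem theorem2p4 (S A : Type) (mul : S -> S -> S) (one : S)
  (act : A -> S -> A)
  (HS : is_monoid mul one)
  (Hnoninv : exists s, frakM mul one s)
  (HA : is_right_act mul one act)
  (Htwo : forall s m, frakM mul one m -> frakM mul one (mul s m))
  (B : A -> Prop) (HB : is_maximal_subact act B)
  (a : A) (HaB : ~ B a)
  (HM : forall s, frakM mul one s <-> B (act a s)) :
  forall I : S -> Prop, is_right_ideal mul I -> proper I ->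
    ~ (forall x : A, actI act I x).
Proof.
  intros I [_ HI] [y Hy] Hall.
  destruct HS as [Hass [Hl Hr]]. destruct HA as [Ha1 Hact].
  destruct HB as [[_ HBc] [_ Hmax]].
  assert (HIM : forall s, I s -> frakM mul one s).
  { intros s Hs t Ht. apply Hy.
    replace y with (mul s (mul t y)) by (rewrite Hass, Ht; apply Hl).
    apply HI; exact Hs. }
  destruct (Hall a) as [b [m [Hm Heq]]].
  set (C := fun x => B x \/ exists s, x = act a s).
  assert (HCsub : is_subact act C).
  { split.
    - exists a. right. exists one. now rewrite Ha1.
    - intros x s [Hx | [u Hu]].
      + left. now apply HBc.
      + right. exists (mul u s). now rewrite Hact, Hu. }
  assert (HnotCb : ~ ~ C b).
  { intro Hnc. apply HaB. apply (Hmax C HCsub (ex_intro _ b Hnc)).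
    - intros x Hx; now left.
    - right. exists one. now rewrite Ha1. }
  apply HnotCb. intros [Hb | [s Hs]].
  - apply HaB. rewrite Heq. now apply HBc.
  - apply HaB. rewrite Heq, Hs, <- Hact. apply HM.
    apply Htwo. now apply HIM.
Qed.
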